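(* Let $P\in\mathcal B\setminus\mathcal B_0$, with coordinates normalized so that $P=(0,0)$. For every $0<\alpha\le1$ there exist $U',V'<0$ (close to $0$) and a constant $I_0>0$ depending on the initial data such that, in the region $D_0=\{(u,v):U'\le u\le 0,\ V'\le v\le0,\ r(u,v)>0\}\subset\mathcal T$, $$|\partial_u\phi(u,v)|\le\frac{I_0}{r(u,v)^{3+\alpha}},\qquad|\partial_v\phi(u,v)|\le\frac{I_0}{r(u,v)^{3+\alpha}}.$$
   Context: Consider the Einstein–scalar field system under spherical symmetry in double null coordinates, $g=-\Omega^2(u,v)\,du\,dv+r^2(u,v)(d\theta^2+\sin^2\theta\,d\varphi^2)$, with scalar field $\phi$; the equations are $r\partial_u\partial_v r=-\partial_ur\,\partial_vr-\frac14\Omega^2$, $r^2\partial_u\partial_v\log\Omega=\partial_ur\,\partial_vr+\frac14\Omega^2-r^2\partial_u\phi\,\partial_v\phi$, $r\partial_u\partial_v\phi=-\partial_ur\,\partial_v\phi-\partial_vr\,\partial_u\phi$, $\partial_u(\Omega^{-2}\partial_ur)=-r\Omega^{-2}(\partial_u\phi)^2$, $\partial_v(\Omega^{-2}\partial_vr)=-r\Omega^{-2}(\partial_v\phi)^2$. We consider the maximal development of Christodoulou's spherically symmetric characteristic data in which a trapped surface forms; $\mathcal T=\{\partial_vr<0,\partial_ur<0,r>0\}$ is the trapped region, $\mathcal B$ the singular future boundary (where $r=0$), $\mathcal B_0$ the first singular point on the centre, and $\mathcal B\setminus\mathcal B_0$ a spacelike $C^1$ curve. Known fact (Christodoulou):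 for $P\in\mathcal B\setminus\mathcal B_0$, $-r\partial_ur\to C_1>0$ and $-r\partial_vr\to C_2>0$ at $P$, continuously along $\mathcal B$, so that in a sufficiently small $D_0$ one has $r\partial_ur+C_1=o(1)$, $r\partial_vr+C_2=o(1)$. *)

(* Defs.v *)
From Stdlib Require Import Reals.
Open Scope R_scope.

Definition pd_u (f : R -> R -> R) (u v l : R) : Prop :=
  derivable_pt_lim (fun s => f s v) u l.
Definition pd_v (f : R -> R -> R) (u v l : R) : Prop :=
  derivable_pt_lim (fun s => f u s) v l.

Definition open2 (Q : R -> R -> Prop) : Prop :=
  forall u v, Q u v -> exists d, 0 < d /\
    forall u' v', Rabs (u' - u) < d -> Rabs (v' - v) < d -> Q u' v'.

Definition cont_on2 (Q : R -> R -> Prop) (f : R -> R -> R) : Prop :=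
  forall u v, Q u v -> forall eps, 0 < eps -> exists d, 0 < d /\
    forall u' v', Q u' v' -> Rabs (u' - u) < d -> Rabs (v' - v) < d ->
      Rabs (f u' v' - f u v) < eps.

(* The spherically symmetric Einstein--scalar field system in double null
   coordinates, holding classically on the open region Q (the part of the
   development with r > 0, away from the centre).
   ru = d_u r, rv = d_v r, pu = d_u phi, pv = d_v phi,
   lv = d_v log Omega, and ruv, luv, puv are the mixed second derivatives
   d_u d_v r, d_u d_v log Omega, d_u d_v phi. *)
Definition ESF_solution (Q : R -> R -> Prop)
  (r Om phi ru rv pu pv lv ruv luv puv : R -> R -> R) : Prop :=
  open2 Q /\
  cont_on2 Q r /\ cont_on2 Q Om /\ cont_on2 Q phi /\
  cont_on2 Q ru /\ cont_on2 Q rv /\ cont_on2 Q pu /\ cont_on2 Q pv /\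
  forall u v, Q u v ->
    0 < r u v /\ 0 < Om u v /\
    pd_u r u v (ru u v) /\ pd_v r u v (rv u v) /\
    pd_u phi u v (pu u v) /\ pd_v phi u v (pv u v) /\
    pd_v (fun a b => ln (Om a b)) u v (lv u v) /\
    pd_u rv u v (ruv u v) /\ pd_u lv u v (luv u v) /\ pd_u pv u v (puv u v) /\
    r u v * ruv u v = - (ru u v * rv u v) - / 4 * (Om u v) ^ 2 /\
    (r u v) ^ 2 * luv u v =
      ru u v * rv u v + / 4 * (Om u v) ^ 2 - (r u v) ^ 2 * pu u v * pv u v /\
    r u v * puv u v = - (ru u v * pv u v) - rv u v * pu u v /\
    pd_u (fun a b => / (Om a b) ^ 2 * ru a b) u v
         (- (r u v * / (Om u v) ^ 2 * (pu u v) ^ 2)) /\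
    pd_v (fun a b => / (Om a b) ^ 2 * rv a b) u v
         (- (r u v * / (Om u v) ^ 2 * (pv u v) ^ 2)).

(* Near P = (0,0) the singular boundary B is a spacelike C^1 curve
   v = gamma(u) (gamma(0) = 0, gamma' < 0), the development lies to the
   past of it (v < gamma u), and r -> 0 on it. *)
Definition spacelike_boundary_at_origin (Q : R -> R -> Prop) (r : R -> R -> R)
  : Prop :=
  exists (d : R) (gamma dgamma : R -> R), 0 < d /\ gamma 0 = 0 /\
    (forall u, Rabs u < d ->
        derivable_pt_lim gamma u (dgamma u) /\ dgamma u < 0) /\
    (forall u, Rabs u < d -> continuity_pt dgamma u) /\
    (forall u v, Rabs u < d -> Rabs v < d -> (Q u v <-> v < gamma u)) /\
    (forall u, Rabs u < d -> forall eps, 0 < eps -> exists e, 0 < e /\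
        forall u' v', Q u' v' -> Rabs (u' - u) < e -> Rabs (v' - gamma u) < e ->
          r u' v' < eps).

(* Christodoulou's known fact at P = (0,0):
   r d_u r + C1 = o(1), r d_v r + C2 = o(1) as (u,v) -> P within Q. *)
Definition christodoulou_asymptotics (Q : R -> R -> Prop) (r ru rv : R -> R -> R)
  : Prop :=
  exists C1 C2, 0 < C1 /\ 0 < C2 /\
    forall eps, 0 < eps -> exists e, 0 < e /\
      forall u v, Q u v -> Rabs u < e -> Rabs v < e ->
        Rabs (r u v * ru u v + C1) < eps /\ Rabs (r u v * rv u v + C2) < eps.

(* Main.v *)
Require Import Defs.
From Stdlib Require Import Reals Lra Psatz Classical.
From Stdlib Require Import IndefiniteDescription.
Open Scope R_scope.

Lemma MVT_any (f f' : R -> R) (a b : R) :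
  (forall c, Rabs (c - a) <= Rabs (b - a) -> derivable_pt_lim f c (f' c)) ->
  exists c, Rabs (c - a) <= Rabs (b - a) /\ f b - f a = f' c * (b - a).
Proof.
  intros H.
  destruct (Rtotal_order a b) as [Hab|[Hab|Hab]].
  - destruct (MVT_cor2 f f' a b Hab) as [c [Hc1 Hc2]].
    + intros c Hc; apply H. rewrite !Rabs_right; lra.
    + exists c; split; [rewrite !Rabs_right; lra | exact Hc1].
  - subst; exists b; split; [lra| ring].
  - destruct (MVT_cor2 f f' b a Hab) as [c [Hc1 Hc2]].
    + intros c Hc; apply H. rewrite !Rabs_left1; lra.
    + exists c; split; [rewrite !Rabs_left1; lra | lra].
Qed.

Lemma D_ext (f g : R -> R) x l :
  (forall s, f s = g s) -> derivable_pt_lim f x l -> derivable_pt_lim g x l.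
Proof.
  intros E H eps He; destruct (H eps He) as [d Hd]; exists d; intros h h0 hd.
  rewrite <- !E; auto.
Qed.

Lemma D_eql (f : R -> R) x l l' : l = l' -> derivable_pt_lim f x l -> derivable_pt_lim f x l'.
Proof. intros ->; auto. Qed.

Lemma D_mult (f g : R -> R) x lf lg :
  derivable_pt_lim f x lf -> derivable_pt_lim g x lg ->
  derivable_pt_lim (fun s => f s * g s) x (lf * g x + f x * lg).
Proof. intros; apply (derivable_pt_lim_mult f g); auto. Qed.

Lemma D_minus (f g : R -> R) x lf lg :
  derivable_pt_lim f x lf -> derivable_pt_lim g x lg ->
  derivable_pt_lim (fun s => f s - g s) x (lf - lg).
Proof. intros; apply (derivable_pt_lim_minus f g); auto. Qed.

Lemma D_Kdiv (f : R -> R) x lf K :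
  f x <> 0 -> derivable_pt_lim f x lf ->
  derivable_pt_lim (fun s => K / (f s * f s)) x (- (2 * K * lf) / (f x * f x * f x)).
Proof.
  intros Hn Hf.
  assert (H2 := D_mult f f x lf lf Hf Hf).
  assert (H3 := derivable_pt_lim_div (fct_cte K) (fun s => f s * f s) x 0 _
     (derivable_pt_lim_const K x) H2).
  assert (Hm : f x * f x <> 0) by (apply Rmult_integral_contrapositive; auto).
  specialize (H3 Hm).
  eapply D_eql; [| exact H3]. unfold fct_cte, Rsqr. field. auto.
Qed.

Definition c2 (Q : R -> R -> Prop) (f : R -> R -> R) u v : Prop :=
  forall eps, 0 < eps -> exists d, 0 < d /\ forall u' v', Q u' v' ->
    Rabs (u' - u) < d -> Rabs (v' - v) < d -> Rabs (f u' v' - f u v) < eps.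

Lemma c2_of Q f u v : cont_on2 Q f -> Q u v -> c2 Q f u v.
Proof. intros H Hq; exact (H u v Hq). Qed.

Lemma c2_comb Q f g h u v :
  c2 Q f u v -> c2 Q g u v ->
  (forall e, 0 < e -> exists e1, 0 < e1 /\ forall x y, Rabs (x - f u v) < e1 ->
       Rabs (y - g u v) < e1 -> Rabs (h x y - h (f u v) (g u v)) < e) ->
  c2 Q (fun a b => h (f a b) (g a b)) u v.
Proof.
  intros Hf Hg Hh eps He.
  destruct (Hh eps He) as [e1 [He1 Hh1]].
  destruct (Hf e1 He1) as [d1 [Hd1 H1]].
  destruct (Hg e1 He1) as [d2 [Hd2 H2]].
  exists (Rmin d1 d2); split; [apply Rmin_glb_lt; auto|].
  intros u' v' Hq Hu Hv.
  apply Hh1.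
  - apply H1; auto; eapply Rlt_le_trans; eauto; apply Rmin_l.
  - apply H2; auto; eapply Rlt_le_trans; eauto; apply Rmin_r.
Qed.

Lemma mult_est x y x0 y0 e1 e2 :
  Rabs (x - x0) <= e1 -> Rabs (y - y0) <= e2 ->
  Rabs (x * y - x0 * y0) <= e1 * (Rabs y0 + e2) + Rabs x0 * e2.
Proof.
  intros H1 H2.
  replace (x * y - x0 * y0) with ((x - x0) * y + x0 * (y - y0)) by ring.
  eapply Rle_trans; [apply Rabs_triang|].
  rewrite !Rabs_mult.
  assert (Hy : Rabs y <= Rabs y0 + e2).
  { replace y with (y0 + (y - y0)) by ring.
    eapply Rle_trans; [apply Rabs_triang| lra]. }
  apply Rplus_le_compat.
  - apply Rmult_le_compat; auto using Rabs_pos.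
  - apply Rmult_le_compat_l; auto using Rabs_pos.
Qed.

Lemma c2_mult Q f g u v : c2 Q f u v -> c2 Q g u v -> c2 Q (fun a b => f a b * g a b) u v.
Proof.
  intros Hf Hg. apply (c2_comb Q f g (fun x y => x * y)); auto.
  intros e He.
  set (M := Rabs (f u v) + Rabs (g u v) + 1).
  assert (HM : 1 <= M) by (unfold M; generalize (Rabs_pos (f u v)) (Rabs_pos (g u v)); lra).
  exists (Rmin 1 (e / (2 * M))). split.
  { apply Rmin_glb_lt; [lra|]. apply Rdiv_lt_0_compat; lra. }
  intros x y Hx Hy.
  set (e1 := Rmin 1 (e / (2 * M))) in *.
  assert (He1 : e1 <= 1) by apply Rmin_l.
  assert (He2 : e1 <= e / (2 * M)) by apply Rmin_r.
  assert (He3 : e1 * (2 * M) <= e).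
  { apply (Rmult_le_compat_r (2 * M)) in He2; [|lra].
    unfold Rdiv in He2; rewrite Rmult_assoc, Rinv_l in He2; lra. }
  eapply Rle_lt_trans; [apply (mult_est x y _ _ e1 e1); lra|].
  assert (0 < e1) by (unfold e1; apply Rmin_glb_lt; [lra|apply Rdiv_lt_0_compat; lra]).
  unfold M in *.
  generalize (Rabs_pos (f u v)) (Rabs_pos (g u v)); intros.
  nra.
Qed.

Lemma c2_plus Q f g u v : c2 Q f u v -> c2 Q g u v -> c2 Q (fun a b => f a b + g a b) u v.
Proof.
  intros Hf Hg. apply (c2_comb Q f g (fun x y => x + y)); auto.
  intros e He; exists (e/2); split; [lra|]. intros x y Hx Hy.
  replace (x + y - (f u v + g u v)) with ((x - f u v) + (y - g u v)) by ring.
  eapply Rle_lt_trans; [apply Rabs_triang| lra].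
Qed.

Lemma c2_const Q (c : R) u v : c2 Q (fun _ _ => c) u v.
Proof. intros e He; exists 1; split; [lra|]; intros; rewrite Rminus_diag, Rabs_R0; auto. Qed.

Lemma c2_opp Q f u v : c2 Q f u v -> c2 Q (fun a b => - f a b) u v.
Proof.
  intros Hf e He; destruct (Hf e He) as [d [Hd H]]; exists d; split; auto.
  intros; replace (- f u' v' - - f u v) with (- (f u' v' - f u v)) by ring.
  rewrite Rabs_Ropp; auto.
Qed.

Lemma c2_abs Q f u v : c2 Q f u v -> c2 Q (fun a b => Rabs (f a b)) u v.
Proof.
  intros Hf e He; destruct (Hf e He) as [d [Hd H]]; exists d; split; auto.
  intros; eapply Rle_lt_trans; [apply Rabs_triang_inv2|]; auto.
Qed.

Lemma c2_inv Q f u v : c2 Q f u v -> 0 < f u v -> c2 Q (fun a b => / f a b) u v.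
Proof.
  intros Hf Hp e He.
  set (f0 := f u v) in *.
  destruct (Hf (Rmin (f0/2) (e * f0 * f0 / 2))) as [d [Hd H]].
  { apply Rmin_glb_lt; [lra|]. assert (0 < e * f0 * f0) by (apply Rmult_lt_0_compat; [apply Rmult_lt_0_compat|]; lra). lra. }
  exists d; split; auto. intros u' v' Hq Hu Hv.
  specialize (H u' v' Hq Hu Hv). fold f0 in H.
  assert (H1 : Rabs (f u' v' - f0) < f0 / 2) by (eapply Rlt_le_trans; [exact H| apply Rmin_l]).
  assert (H2 : Rabs (f u' v' - f0) < e * f0 * f0 / 2) by (eapply Rlt_le_trans; [exact H| apply Rmin_r]).
  set (x := f u' v') in *. clearbody x f0.
  apply Rabs_def2 in H1. destruct H1.
  assert (Hx : f0 / 2 < x) by lra.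
  replace (/ x - / f0) with ((f0 - x) * / (x * f0)) by (field; lra).
  assert (Hxf : 0 < x * f0) by nra.
  rewrite Rabs_mult, (Rabs_right (/ (x * f0))) by (left; apply Rinv_0_lt_compat; lra).
  rewrite <- Rabs_Ropp. replace (- (f0 - x)) with (x - f0) by ring.
  assert (0 < e * f0 * (x - f0/2)) by (repeat apply Rmult_lt_0_compat; lra).
  assert (Hk : Rabs (x - f0) < e * (x * f0)) by lra.
  apply (Rmult_lt_compat_r (/ (x * f0))) in Hk; [|apply Rinv_0_lt_compat; lra].
  rewrite Rmult_assoc, Rinv_r in Hk by lra. lra.
Qed.

Lemma c2_ext Q f g u v : (forall a b, Q a b -> f a b = g a b) -> Q u v ->
  c2 Q f u v -> c2 Q g u v.
Proof.
  intros E Hq Hf e He; destruct (Hf e He) as [d [Hd H]]; exists d; split; auto.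
  intros u' v' Hq' Hu Hv; rewrite <- !E; auto.
Qed.

Lemma schwarz (Q : R -> R -> Prop) (phi pu pv puv : R -> R -> R) u v :
  open2 Q -> Q u v ->
  (forall x y, Q x y -> pd_u phi x y (pu x y)) ->
  (forall x y, Q x y -> pd_v phi x y (pv x y)) ->
  (forall x y, Q x y -> pd_u pv x y (puv x y)) ->
  c2 Q puv u v -> pd_v pu u v (puv u v).
Proof.
  intros Hop Hq Hpu Hpv Hpuv Hc.
  unfold pd_v, derivable_pt_lim. intros eps Heps.
  destruct (Hop u v Hq) as [d0 [Hd0 HQ]].
  destruct (Hc (eps/2)) as [d1 [Hd1 Hc1]]; [lra|].
  assert (Hdel : 0 < Rmin d0 d1 / 2) by (assert (0 < Rmin d0 d1) by (apply Rmin_glb_lt; auto); lra).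
  exists (mkposreal _ Hdel). simpl. intros k Hk0 Hkd.
  assert (Hk0' : 0 < Rabs k) by (apply Rabs_pos_lt; auto).
  assert (Hm0 : Rmin d0 d1 <= d0) by apply Rmin_l.
  assert (Hm1 : Rmin d0 d1 <= d1) by apply Rmin_r.
  set (L := (pu u (v + k) - pu u v) / k).
  apply (Rle_lt_trans _ (eps/2)); [|lra].
  apply Rnot_lt_le; intro Hcon.
  set (eta := Rabs (L - puv u v) - eps / 2).
  assert (Heta : 0 < eta) by (unfold eta; lra).
  assert (Hek : 0 < eta * Rabs k / 2) by (assert (0 < eta * Rabs k) by (apply Rmult_lt_0_compat; lra); lra).
  assert (Ha : pd_u phi u (v + k) (pu u (v + k))).
  { apply Hpu, HQ; [rewrite Rminus_diag, Rabs_R0; lra|].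
    replace (v + k - v) with k by ring; lra. }
  destruct (Ha _ Hek) as [δa Hδa].
  destruct (Hpu u v Hq _ Hek) as [δb Hδb].
  set (h := Rmin (Rmin δa δb) (Rmin d0 d1 / 2) / 2).
  assert (Hh0 : 0 < h).
  { unfold h. assert (0 < Rmin (Rmin δa δb) (Rmin d0 d1 / 2)); [|lra].
    apply Rmin_glb_lt; [apply Rmin_glb_lt; apply cond_pos| lra]. }
  assert (Hh1 : h < δa).
  { unfold h. assert (Rmin (Rmin δa δb) (Rmin d0 d1 / 2) <= δa).
    { eapply Rle_trans; apply Rmin_l. }
    assert (0 < δa) by apply cond_pos. lra. }
  assert (Hh2 : h < δb).
  { unfold h. assert (Rmin (Rmin δa δb) (Rmin d0 d1 / 2) <= δb).
    { eapply Rle_trans; [apply Rmin_l| apply Rmin_r]. }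
    assert (0 < δb) by apply cond_pos. lra. }
  assert (Hh3 : h < Rmin d0 d1 / 2).
  { unfold h. assert (Rmin (Rmin δa δb) (Rmin d0 d1 / 2) <= Rmin d0 d1 / 2) by apply Rmin_r. lra. }
  clearbody h.
  assert (Habsh : Rabs h = h) by (apply Rabs_right; lra).
  specialize (Hδa h ltac:(lra) ltac:(rewrite Habsh; lra)).
  specialize (Hδb h ltac:(lra) ltac:(rewrite Habsh; lra)).
  destruct (MVT_any (fun s => phi (u + h) s - phi u s) (fun s => pv (u + h) s - pv u s) v (v + k))
    as [σ [Hσ Eσ]].
  { intros c Hc'. apply (D_minus (fun s => phi (u + h) s) (fun s => phi u s)).
    - apply Hpv. apply HQ; [replace (u + h - u) with h by ring; lra|].
      replace (v + k - v) with k in Hc' by ring; lra.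
    - apply Hpv. apply HQ; [rewrite Rminus_diag, Rabs_R0; lra|].
      replace (v + k - v) with k in Hc' by ring; lra. }
  replace (v + k - v) with k in Hσ, Eσ by ring.
  assert (HQσ : forall t, Rabs (t - u) <= h -> Q t σ).
  { intros t Ht; apply HQ; lra. }
  destruct (MVT_any (fun t => pv t σ) (fun t => puv t σ) u (u + h)) as [τ [Hτ Eτ]].
  { intros c Hc'. apply Hpuv. apply HQσ. replace (u + h - u) with h in Hc' by ring. lra. }
  replace (u + h - u) with h in Hτ, Eτ by ring. rewrite Habsh in Hτ.
  assert (Hclose : Rabs (puv τ σ - puv u v) < eps / 2).
  { apply Hc1; [apply HQσ; lra| lra| lra]. }
  simpl in Eσ, Eτ.
  set (P := puv τ σ) in *.
  set (D1 := (phi (u + h) (v + k) - phi u (v + k)) / h) in *.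
  set (D2 := (phi (u + h) v - phi u v) / h) in *.
  replace (u + h) with (u + h) in Hδa by ring.
  assert (ED : D1 - D2 = P * k).
  { unfold D1, D2. apply (Rmult_eq_reg_r h); [|lra].
    field_simplify; [|lra]. rewrite Eτ in Eσ. lra. }
  assert (Hd1' : Rabs (D1 - pu u (v + k)) < eta * Rabs k / 2) by exact Hδa.
  assert (Hd2' : Rabs (D2 - pu u v) < eta * Rabs k / 2) by exact Hδb.
  assert (HLk : L * k = pu u (v + k) - pu u v) by (unfold L; field; auto).
  assert (Hdiff : Rabs ((L - P) * k) < eta * Rabs k).
  { replace ((L - P) * k) with ((pu u (v + k) - D1) - (pu u v - D2)) by lra.
    eapply Rle_lt_trans; [apply Rabs_triang|]. rewrite Rabs_Ropp.
    rewrite <- (Rabs_Ropp (pu u (v + k) - D1)).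
    replace (- (pu u (v + k) - D1)) with (D1 - pu u (v + k)) by ring.
    replace (- (pu u v - D2)) with (D2 - pu u v) by ring.
    rewrite <- (Rabs_Ropp (pu u v - D2)).
    replace (- (pu u v - D2)) with (D2 - pu u v) by ring. lra. }
  rewrite Rabs_mult in Hdiff.
  assert (HLP : Rabs (L - P) < eta).
  { apply (Rmult_lt_reg_r (Rabs k)); auto. }
  assert (Rabs (L - puv u v) <= Rabs (L - P) + Rabs (P - puv u v)).
  { replace (L - puv u v) with ((L - P) + (P - puv u v)) by ring. apply Rabs_triang. }
  unfold eta in HLP. lra.
Qed.

Lemma conv_lt (r a K : R) : 0 < r -> (r * r * Rabs a < K <-> Rabs a < K / (r * r)).
Proof.
  intros Hr. assert (Hrr : 0 < r * r) by nra. split; intro H.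
  - apply (Rmult_lt_compat_r (/ (r * r))) in H; [|apply Rinv_0_lt_compat; lra].
    replace (r * r * Rabs a * / (r * r)) with (Rabs a) in H by (field; lra). exact H.
  - apply (Rmult_lt_compat_r (r * r)) in H; [|lra].
    replace (K / (r * r) * (r * r)) with K in H by (field; lra). lra.
Qed.

Lemma cluster (xs : nat -> R) l : ValAdh xs l ->
  forall δ, 0 < δ -> exists p, Rabs (xs p - l) < δ /\ / (INR p + 1) < δ.
Proof.
  intros H δ Hδ.
  destruct (archimed_cor1 δ Hδ) as [N [HN HN0]].
  destruct (H (disc l (mkposreal δ Hδ)) N) as [p [Hp Hv]].
  { exists (mkposreal δ Hδ). intros y Hy; exact Hy. }
  exists p; split; [exact Hv|].
  apply le_INR in Hp. assert (0 < INR N) by (apply lt_0_INR; auto).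
  eapply Rle_lt_trans; [|exact HN].
  apply Rinv_le_contravar; lra.
Qed.

Lemma core (Q : R -> R -> Prop) (r a b : R -> R -> R) (U' V' u0 v0 K lam : R)
  (dap dam dbp dbm : R -> R -> R) :
  U' <= u0 -> V' <= v0 -> 0 < K -> 0 < lam ->
  (forall x y, U' <= x <= u0 -> V' <= y <= v0 -> Q x y /\ 0 < r x y) ->
  (forall x y, U' <= x <= u0 -> V' <= y <= v0 ->
     derivable_pt_lim (fun s => a x s - K / (r x s * r x s)) y (dap x y) /\
     derivable_pt_lim (fun s => - a x s - K / (r x s * r x s)) y (dam x y) /\
     derivable_pt_lim (fun s => b s y - lam * K / (r s y * r s y)) x (dbp x y) /\
     derivable_pt_lim (fun s => - b s y - lam * K / (r s y * r s y)) x (dbm x y) /\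
     (r x y * r x y * Rabs (b x y) < lam * K -> dap x y < 0 /\ dam x y < 0) /\
     (r x y * r x y * Rabs (a x y) < K -> dbp x y < 0 /\ dbm x y < 0) /\
     c2 Q (fun x y => r x y * r x y * Rabs (a x y)) x y /\
     c2 Q (fun x y => r x y * r x y * Rabs (b x y)) x y) ->
  (forall x, U' <= x <= u0 -> r x V' * r x V' * Rabs (a x V') < K) ->
  (forall y, V' <= y <= v0 -> r U' y * r U' y * Rabs (b U' y) < lam * K) ->
  r u0 v0 * r u0 v0 * Rabs (a u0 v0) < K /\ r u0 v0 * r u0 v0 * Rabs (b u0 v0) < lam * K.
Proof.
  intros HU HV HK Hlam HQ HD Ea Eb.
  set (bad := fun x y => (U' <= x <= u0 /\ V' <= y <= v0) /\
     (K <= r x y * r x y * Rabs (a x y) \/ lam * K <= r x y * r x y * Rabs (b x y))).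
  assert (Hgood : forall x y, U' <= x <= u0 -> V' <= y <= v0 -> ~ bad x y ->
     r x y * r x y * Rabs (a x y) < K /\ r x y * r x y * Rabs (b x y) < lam * K).
  { intros x y Hx Hy Hn. split; apply Rnot_le_lt; intro; apply Hn; split; auto. }
  destruct (classic (exists x y, bad x y)) as [Hex|Hnex].
  2:{ apply Hgood; try lra. intro Hb; apply Hnex; eauto. }
  exfalso.
  set (E := fun z => exists x y, bad x y /\ z = - (x + y)).
  assert (HEb : bound E).
  { exists (- (U' + V')). intros z [x [y [[[Hx Hy] _] ->]]]. lra. }
  assert (HEn : exists z, E z).
  { destruct Hex as [x [y Hb]]. exists (- (x + y)), x, y; auto. }
  destruct (completeness E HEb HEn) as [mm [Hub Hlub]].
  set (T := - mm).
  assert (F1 : forall x y, bad x y -> T <= x + y).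
  { intros x y Hb. assert (- (x + y) <= mm) by (apply Hub; exists x, y; auto). unfold T; lra. }
  assert (F2 : forall eps, 0 < eps -> exists x y, bad x y /\ x + y < T + eps).
  { intros eps He. apply NNPP; intro Hn.
    assert (mm <= mm - eps); [|lra].
    apply Hlub. intros z [x [y [Hb ->]]].
    apply Rnot_lt_le; intro Hz. apply Hn. exists x, y; split; auto. unfold T; lra. }
  assert (Hseq : forall n : nat, {p : R * R | bad (fst p) (snd p) /\ fst p + snd p < T + / (INR n + 1)}).
  { intro n. apply constructive_indefinite_description.
    assert (Hp : 0 < / (INR n + 1)) by (apply Rinv_0_lt_compat; generalize (pos_INR n); lra).
    destruct (F2 _ Hp) as [x [y H]]. exists (x, y); simpl; auto. }
  set (xs := fun n => fst (proj1_sig (Hseq n))).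
  set (ys := fun n => snd (proj1_sig (Hseq n))).
  assert (Hxs : forall n, bad (xs n) (ys n) /\ T <= xs n + ys n /\ xs n + ys n < T + / (INR n + 1)).
  { intro n. unfold xs, ys. destruct (Hseq n) as [[x y] [H1 H2]]; simpl.
    split; [|split]; auto. }
  destruct (Bolzano_Weierstrass xs (fun c => U' <= c <= u0) (compact_P3 U' u0)) as [l Hl].
  { intro n. destruct (Hxs n) as [[[Hx _] _] _]. exact Hx. }
  assert (Hcl := cluster xs l Hl).
  set (ys0 := T - l).
  assert (Hl1 : U' <= l).
  { apply Rnot_lt_le; intro H. destruct (Hcl (U' - l)) as [p [Hp _]]; [lra|].
    destruct (Hxs p) as [[[Hx _] _] _]. apply Rabs_def2 in Hp. lra. }
  assert (Hl2 : l <= u0).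
  { apply Rnot_lt_le; intro H. destruct (Hcl (l - u0)) as [p [Hp _]]; [lra|].
    destruct (Hxs p) as [[[Hx _] _] _]. apply Rabs_def2 in Hp. lra. }
  assert (Hl3 : V' <= ys0).
  { apply Rnot_lt_le; intro H. destruct (Hcl ((V' - ys0)/2)) as [p [Hp Hp']]; [lra|].
    destruct (Hxs p) as [[[_ Hy] _] [_ Hs]]. apply Rabs_def2 in Hp. unfold ys0 in *. lra. }
  assert (Hl4 : ys0 <= v0).
  { apply Rnot_lt_le; intro H. destruct (Hcl ((ys0 - v0)/2)) as [p [Hp Hp']]; [lra|].
    destruct (Hxs p) as [[[_ Hy] _] [Hs _]]. apply Rabs_def2 in Hp. unfold ys0 in *. lra. }
  assert (Hbad : bad l ys0).
  { apply NNPP; intro Hn.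
    destruct (Hgood l ys0 (conj Hl1 Hl2) (conj Hl3 Hl4) Hn) as [G1 G2].
    destruct (HD l ys0 (conj Hl1 Hl2) (conj Hl3 Hl4)) as [_ [_ [_ [_ [_ [_ [C1 C2]]]]]]].
    destruct (C1 (K - r l ys0 * r l ys0 * Rabs (a l ys0))) as [d1 [Hd1 H1]]; [lra|].
    destruct (C2 (lam * K - r l ys0 * r l ys0 * Rabs (b l ys0))) as [d2 [Hd2 H2]]; [lra|].
    assert (Hm : 0 < Rmin d1 d2) by (apply Rmin_glb_lt; auto).
    destruct (Hcl (Rmin d1 d2 / 2)) as [p [Hp Hp']]; [lra|].
    destruct (Hxs p) as [[[Hx Hy] Hb] [Hs1 Hs2]].
    assert (Hyp : Rabs (ys p - ys0) < Rmin d1 d2).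
    { apply Rabs_def2 in Hp. apply Rabs_def1; unfold ys0; lra. }
    assert (Hm1 : Rmin d1 d2 <= d1) by apply Rmin_l.
    assert (Hm2 : Rmin d1 d2 <= d2) by apply Rmin_r.
    destruct (HQ _ _ Hx Hy) as [Hq _].
    specialize (H1 (xs p) (ys p) Hq ltac:(lra) ltac:(lra)).
    specialize (H2 (xs p) (ys p) Hq ltac:(lra) ltac:(lra)).
    apply Rabs_def2 in H1. apply Rabs_def2 in H2.
    destruct Hb; lra. }
  assert (Hmin : forall x y, U' <= x <= u0 -> V' <= y <= v0 -> x + y < T ->
     r x y * r x y * Rabs (a x y) < K /\ r x y * r x y * Rabs (b x y) < lam * K).
  { intros x y Hx Hy Hs. apply Hgood; auto. intro Hb. apply F1 in Hb. lra. }
  destruct Hbad as [_ [Ha|Hb]].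
  -
    destruct (Rle_lt_or_eq_dec V' ys0 Hl3) as [Hlt|Heq].
    2:{ rewrite <- Heq in Ha. specialize (Ea l (conj Hl1 Hl2)). lra. }
    destruct (HQ l ys0 (conj Hl1 Hl2) (conj Hl3 Hl4)) as [_ Hr].
    assert (Hr0 : 0 < r l V') by (apply (HQ l V'); lra).
    destruct (MVT_cor2 (fun s => a l s - K / (r l s * r l s)) (dap l) V' ys0 Hlt) as [c [Ec Hc]].
    { intros c Hc. apply (HD l c); lra. }
    destruct (MVT_cor2 (fun s => - a l s - K / (r l s * r l s)) (dam l) V' ys0 Hlt) as [c' [Ec' Hc']].
    { intros c' Hc'. apply (HD l c'); lra. }
    assert (Hn1 : dap l c < 0).
    { destruct (HD l c (conj Hl1 Hl2) ltac:(lra)) as [_ [_ [_ [_ [N _]]]]].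
      apply N. apply (Hmin l c); try lra. unfold ys0 in *; lra. }
    assert (Hn2 : dam l c' < 0).
    { destruct (HD l c' (conj Hl1 Hl2) ltac:(lra)) as [_ [_ [_ [_ [N _]]]]].
      apply N. apply (Hmin l c'); try lra. unfold ys0 in *; lra. }
    assert (E0 := Ea l (conj Hl1 Hl2)). apply (conv_lt _ _ _ Hr0) in E0.
    apply Rabs_def2 in E0.
    assert (Hpos : 0 < ys0 - V') by lra.
    assert (Rabs (a l ys0) < K / (r l ys0 * r l ys0)).
    { apply Rabs_def1.
      - assert (dap l c * (ys0 - V') < 0) by (apply Rmult_neg_pos; lra). lra.
      - assert (dam l c' * (ys0 - V') < 0) by (apply Rmult_neg_pos; lra). lra. }
    apply (conv_lt _ _ _ Hr) in H. lra.
  -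
    destruct (Rle_lt_or_eq_dec U' l Hl1) as [Hlt|Heq].
    2:{ rewrite <- Heq in Hb. specialize (Eb ys0 (conj Hl3 Hl4)). lra. }
    destruct (HQ l ys0 (conj Hl1 Hl2) (conj Hl3 Hl4)) as [_ Hr].
    assert (Hr0 : 0 < r U' ys0) by (apply (HQ U' ys0); lra).
    destruct (MVT_cor2 (fun s => b s ys0 - lam * K / (r s ys0 * r s ys0)) (fun s => dbp s ys0) U' l Hlt) as [c [Ec Hc]].
    { intros c Hc. apply (HD c ys0); lra. }
    destruct (MVT_cor2 (fun s => - b s ys0 - lam * K / (r s ys0 * r s ys0)) (fun s => dbm s ys0) U' l Hlt) as [c' [Ec' Hc']].
    { intros c' Hc'. apply (HD c' ys0); lra. }
    assert (Hn1 : dbp c ys0 < 0).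
    { destruct (HD c ys0 ltac:(lra) (conj Hl3 Hl4)) as [_ [_ [_ [_ [_ [N _]]]]]].
      apply N. apply (Hmin c ys0); try lra. unfold ys0 in *; lra. }
    assert (Hn2 : dbm c' ys0 < 0).
    { destruct (HD c' ys0 ltac:(lra) (conj Hl3 Hl4)) as [_ [_ [_ [_ [_ [N _]]]]]].
      apply N. apply (Hmin c' ys0); try lra. unfold ys0 in *; lra. }
    assert (E0 := Eb ys0 (conj Hl3 Hl4)). apply (conv_lt _ _ _ Hr0) in E0.
    apply Rabs_def2 in E0.
    assert (Hpos : 0 < l - U') by lra.
    assert (Rabs (b l ys0) < lam * K / (r l ys0 * r l ys0)).
    { apply Rabs_def1.
      - assert (dbp c ys0 * (l - U') < 0) by (apply Rmult_neg_pos; lra). lra.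
      - assert (dbm c' ys0 * (l - U') < 0) by (apply Rmult_neg_pos; lra). lra. }
    apply (conv_lt _ _ _ Hr) in H. lra.
Qed.

Lemma D_opp (f : R -> R) x l : derivable_pt_lim f x l -> derivable_pt_lim (fun s => - f s) x (- l).
Proof. intros; apply (derivable_pt_lim_opp f); auto. Qed.

Lemma gamma_dec (gamma dgamma : R -> R) d :
  (forall u, Rabs u < d -> derivable_pt_lim gamma u (dgamma u) /\ dgamma u < 0) ->
  forall x y, Rabs x < d -> Rabs y < d -> x < y -> gamma y < gamma x.
Proof.
  intros H x y Hx Hy Hxy.
  destruct (MVT_cor2 gamma dgamma x y Hxy) as [c [E Hc]].
  { intros c Hc. apply H. apply Rabs_def2 in Hx; apply Rabs_def2 in Hy. apply Rabs_def1; lra. }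
  assert (Hc' : Rabs c < d) by (apply Rabs_def2 in Hx; apply Rabs_def2 in Hy; apply Rabs_def1; lra).
  destruct (H c Hc') as [_ Hn].
  assert (dgamma c * (y - x) < 0) by (apply Rmult_neg_pos; lra). lra.
Qed.

Lemma c2_cont_u Q g u v : open2 Q -> Q u v -> c2 Q g u v -> continuity_pt (fun s => g s v) u.
Proof.
  intros Hop Hq Hc. unfold continuity_pt, continue_in, limit1_in, limit_in; simpl; unfold R_dist.
  intros eps He. destruct (Hop u v Hq) as [d0 [Hd0 HQ]]. destruct (Hc eps He) as [d1 [Hd1 H1]].
  exists (Rmin d0 d1); split; [apply Rmin_glb_lt; auto|].
  intros x [_ Hx]. assert (Rmin d0 d1 <= d0) by apply Rmin_l. assert (Rmin d0 d1 <= d1) by apply Rmin_r.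
  apply H1; [apply HQ| |]; rewrite ?Rminus_diag, ?Rabs_R0; lra.
Qed.

Lemma c2_cont_v Q g u v : open2 Q -> Q u v -> c2 Q g u v -> continuity_pt (fun s => g u s) v.
Proof.
  intros Hop Hq Hc. unfold continuity_pt, continue_in, limit1_in, limit_in; simpl; unfold R_dist.
  intros eps He. destruct (Hop u v Hq) as [d0 [Hd0 HQ]]. destruct (Hc eps He) as [d1 [Hd1 H1]].
  exists (Rmin d0 d1); split; [apply Rmin_glb_lt; auto|].
  intros x [_ Hx]. assert (Rmin d0 d1 <= d0) by apply Rmin_l. assert (Rmin d0 d1 <= d1) by apply Rmin_r.
  apply H1; [apply HQ| |]; rewrite ?Rminus_diag, ?Rabs_R0; lra.
Qed.

Lemma key_ineq (P Rv B s K lam C1 C2 e0 : R) :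
  0 < s -> 0 < C1 -> 0 < C2 -> e0 <= C1 / 4 -> e0 <= C2 / 4 -> 0 < K -> lam = C2 / C1 ->
  Rabs (P + C1) < e0 -> Rabs (Rv + C2) < e0 -> s * Rabs B < lam * K ->
  - P * B * s + 2 * K * Rv < 0 /\ P * B * s + 2 * K * Rv < 0.
Proof.
  intros Hs H1 H2 He1 He2 HK Hl HP HR HB.
  apply Rabs_def2 in HP. apply Rabs_def2 in HR.
  assert (HPa : Rabs P <= C1 + e0) by (apply Rabs_le; lra).
  assert (Hlam : (C1 + e0) * lam <= 5 / 4 * C2).
  { subst lam. assert (e0 / C1 <= 1/4). { apply (Rmult_le_reg_r C1); [lra|]. field_simplify; lra. }
    replace ((C1 + e0) * (C2 / C1)) with (C2 + C2 * (e0 / C1)) by (field; lra). nra. }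
  assert (Hm : Rabs (P * B * s) <= 5 / 4 * C2 * K).
  { rewrite !Rabs_mult, (Rabs_right s) by lra.
    assert (Rabs P * (s * Rabs B) <= (C1 + e0) * (lam * K)).
    { apply Rmult_le_compat; auto using Rabs_pos. apply Rmult_le_pos; [lra|apply Rabs_pos]. lra. }
    assert (0 < lam) by (subst; apply Rdiv_lt_0_compat; lra). nra. }
  generalize (Rle_abs (P * B * s)) (Rle_abs (- (P * B * s))); rewrite Rabs_Ropp; intros.
  assert (2 * K * Rv < 2 * K * (- C2 + e0)) by (apply Rmult_lt_compat_l; lra).
  split; nra.
Qed.

Lemma Rpower_le_cube (r alpha : R) : 0 < r < 1 -> 0 < alpha -> Rpower r (3 + alpha) <= r * r * r.
Proof.
  intros Hr Ha. rewrite Rpower_plus.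
  replace 3 with (INR 3) by (simpl; ring). rewrite Rpower_pow by lra.
  assert (Hp : Rpower r alpha <= 1).
  { unfold Rpower. rewrite <- exp_0.
    assert (ln r < 0) by (rewrite <- ln_1; apply ln_increasing; lra).
    destruct (Rle_lt_dec (alpha * ln r) 0) as [Hle|Hlt].
    - destruct Hle as [Hlt|Heq]; [left; apply exp_increasing; auto| rewrite Heq; lra].
    - nra. }
  assert (Hp0 : 0 < Rpower r alpha) by (unfold Rpower; apply exp_pos).
  simpl. assert (0 < r * (r * (r * 1))) by (repeat apply Rmult_lt_0_compat; lra). nra.
Qed.

Lemma final_bound (r p K I0 alpha : R) : 0 < r < 1 -> 0 < alpha ->
  r * r * Rabs (r * p) < K -> K <= I0 -> Rabs p <= I0 / Rpower r (3 + alpha).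
Proof.
  intros Hr Ha HK HI.
  assert (HR := Rpower_le_cube r alpha Hr Ha).
  assert (HR0 : 0 < Rpower r (3 + alpha)) by (unfold Rpower; apply exp_pos).
  rewrite Rabs_mult, (Rabs_right r) in HK by lra.
  apply (Rmult_le_reg_r (Rpower r (3 + alpha))); auto.
  replace (I0 / Rpower r (3 + alpha) * Rpower r (3 + alpha)) with I0 by (field; lra).
  generalize (Rabs_pos p); intro. nra.
Qed.

Theorem proposition4p2
  (Q : R -> R -> Prop)
  (r Om phi ru rv pu pv lv ruv luv puv : R -> R -> R)
  (Hsol : ESF_solution Q r Om phi ru rv pu pv lv ruv luv puv)
  (HB : spacelike_boundary_at_origin Q r)
  (HC : christodoulou_asymptotics Q r ru rv) :
  forall alpha, 0 < alpha <= 1 ->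
  exists U' V' I0, U' < 0 /\ V' < 0 /\ 0 < I0 /\
    forall u v, U' <= u <= 0 -> V' <= v <= 0 -> Q u v ->
      (ru u v < 0 /\ rv u v < 0 /\ 0 < r u v) /\
      Rabs (pu u v) <= I0 / Rpower (r u v) (3 + alpha) /\
      Rabs (pv u v) <= I0 / Rpower (r u v) (3 + alpha).
Proof.
  destruct Hsol as [Hop [Cr [COm [Cphi [Cru [Crv [Cpu [Cpv Hpt]]]]]]]].
  destruct HB as [d [gamma [dgamma [Hd [Hg0 [Hgd [Hgc [HQg Hrz]]]]]]]].
  destruct HC as [C1 [C2 [HC1 [HC2 HCa]]]].
  intros alpha Halpha.
  set (e0 := Rmin C1 C2 / 4).
  assert (He0 : 0 < e0) by (unfold e0; assert (0 < Rmin C1 C2) by (apply Rmin_glb_lt; auto); lra).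
  assert (He01 : e0 <= C1 / 4) by (unfold e0; generalize (Rmin_l C1 C2); lra).
  assert (He02 : e0 <= C2 / 4) by (unfold e0; generalize (Rmin_r C1 C2); lra).
  clearbody e0.
  destruct (HCa e0 He0) as [e [He HCe]].
  assert (Hd0 : Rabs 0 < d) by (rewrite Rabs_R0; auto).
  destruct (Hrz 0 Hd0 1 Rlt_0_1) as [e' [He' Hre]].
  set (m := Rmin d (Rmin e e')).
  assert (Hm0 : 0 < m) by (unfold m; repeat apply Rmin_glb_lt; auto).
  assert (Hmd : m <= d) by apply Rmin_l.
  assert (Hme : m <= e) by (unfold m; eapply Rle_trans; [apply Rmin_r| apply Rmin_l]).
  assert (Hme' : m <= e') by (unfold m; eapply Rle_trans; [apply Rmin_r| apply Rmin_r]).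
  clearbody m.
  set (U := - m / 2).
  assert (HU : U < 0) by (unfold U; lra).
  assert (Hsm : forall x, U <= x <= 0 -> Rabs x < m).
  { intros x Hx. apply Rabs_def1; unfold U in *; lra. }
  assert (Hgdec := gamma_dec gamma dgamma d Hgd).
  assert (Hgle : forall x y, U <= x <= 0 -> U <= y <= 0 -> x <= y -> gamma y <= gamma x).
  { intros x y Hx Hy Hxy. destruct Hxy as [Hlt|Heq]; [left; apply Hgdec; auto|subst; lra].
    - apply (Rlt_le_trans _ m); auto.
    - apply (Rlt_le_trans _ m); auto. }
  assert (HQin : forall x y, U <= x <= 0 -> U <= y <= 0 -> y < gamma x -> Q x y).
  { intros x y Hx Hy Hlt. apply HQg; auto; apply (Rlt_le_trans _ m); auto. }
  assert (HinQ : forall u0 v0 x y, U <= u0 <= 0 -> U <= v0 <= 0 -> Q u0 v0 ->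
            U <= x <= u0 -> U <= y <= v0 -> Q x y).
  { intros u0 v0 x y Hu0 Hv0 Hq Hx Hy.
    assert (v0 < gamma u0).
    { apply (HQg u0 v0); auto; apply (Rlt_le_trans _ m); auto. }
    assert (gamma u0 <= gamma x) by (apply Hgle; lra).
    apply HQin; lra. }
  assert (Hedge1 : forall x, U <= x <= 0 -> Q x U).
  { intros x Hx. apply HQin; try lra. assert (gamma 0 <= gamma x) by (apply Hgle; lra). lra. }
  assert (Hedge2 : forall y, U <= y <= 0 -> Q U y).
  { intros y Hy. apply HQin; try lra.
    assert (gamma 0 < gamma U).
    { apply Hgdec; try lra; apply (Rlt_le_trans _ m); auto; apply Hsm; lra. }
    lra. }
  assert (Hgood : forall x y, U <= x <= 0 -> U <= y <= 0 -> Q x y ->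
     (0 < r x y < 1) /\ Rabs (r x y * ru x y + C1) < e0 /\ Rabs (r x y * rv x y + C2) < e0).
  { intros x y Hx Hy Hq. split; [split|].
    - apply (Hpt x y Hq).
    - apply (Hre x y Hq); [rewrite Rminus_0_r| rewrite Hg0, Rminus_0_r];
        apply (Rlt_le_trans _ m); auto.
    - apply (HCe x y Hq); apply (Rlt_le_trans _ m); auto. }
  assert (Cap : forall x y, Q x y -> c2 Q (fun a b => Rabs (r a b * pu a b)) x y).
  { intros x y Hq. apply c2_abs, c2_mult; apply c2_of; auto. }
  assert (Cbp : forall x y, Q x y -> c2 Q (fun a b => Rabs (r a b * pv a b)) x y).
  { intros x y Hq. apply c2_abs, c2_mult; apply c2_of; auto. }
  destruct (continuity_ab_maj (fun s => Rabs (r s U * pu s U)) U 0) as [Mx [HMx HMxr]].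
  { lra. }
  { intros c Hc. apply (c2_cont_u Q (fun a b => Rabs (r a b * pu a b))); auto. }
  destruct (continuity_ab_maj (fun s => Rabs (r U s * pv U s)) U 0) as [My [HMy HMyr]].
  { lra. }
  { intros c Hc. apply (c2_cont_v Q (fun a b => Rabs (r a b * pv a b))); auto. }
  set (M1 := Rabs (r Mx U * pu Mx U)) in *.
  set (M2 := Rabs (r U My * pv U My)) in *.
  assert (HM1 : 0 <= M1) by apply Rabs_pos.
  assert (HM2 : 0 <= M2) by apply Rabs_pos.
  clearbody M1 M2.
  set (lam := C2 / C1).
  assert (Hlam : 0 < lam) by (apply Rdiv_lt_0_compat; auto).
  set (K := M1 + M2 * (C1 / C2) + 1).
  assert (HCC : 0 < C1 / C2) by (apply Rdiv_lt_0_compat; auto).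
  assert (HM2C : 0 <= M2 * (C1 / C2)) by (apply Rmult_le_pos; lra).
  assert (HK : 0 < K) by (unfold K; lra).
  assert (HK1 : M1 < K) by (unfold K; lra).
  assert (HK2 : M2 < lam * K).
  { unfold K, lam. replace (C2 / C1 * (M1 + M2 * (C1 / C2) + 1)) with (C2 / C1 * M1 + M2 + C2 / C1) by (field; lra).
    assert (0 <= C2 / C1 * M1) by (apply Rmult_le_pos; [left; apply Rdiv_lt_0_compat; auto | lra]). assert (0 < C2 / C1) by (apply Rdiv_lt_0_compat; auto). lra. }
  assert (Hlamdef : lam = C2 / C1) by reflexivity.
  clearbody K lam.
  exists U, U, (K + lam * K). split; [auto|split; [auto|split]].
  { assert (0 < lam * K) by (apply Rmult_lt_0_compat; auto). lra. }
  intros u0 v0 Hu0 Hv0 Hq0.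
  destruct (Hgood u0 v0 Hu0 Hv0 Hq0) as [[Hr0 Hr1] [Hru Hrv]].
  assert (Hpd : forall x y, Q x y -> pd_v pu x y (puv x y)).
  { intros x y Hq. apply (schwarz Q phi pu pv puv x y Hop Hq).
    - intros a b Ha; apply (Hpt a b Ha).
    - intros a b Ha; apply (Hpt a b Ha).
    - intros a b Ha; apply (Hpt a b Ha).
    - apply (c2_ext Q (fun a b => (- (ru a b * pv a b) + - (rv a b * pu a b)) * / r a b)); auto.
      + intros a b Ha. destruct (Hpt a b Ha) as [Hra [_ [_ [_ [_ [_ [_ [_ [_ [_ [_ [_ [E3 _]]]]]]]]]]]]].
        apply (Rmult_eq_reg_l (r a b)); [|lra]. rewrite E3. field. lra.
      + apply c2_mult; [apply c2_plus; apply c2_opp; apply c2_mult; apply c2_of; auto|].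
        apply c2_inv; [apply c2_of; auto| apply (Hpt x y Hq)]. }
  assert (Hcore : r u0 v0 * r u0 v0 * Rabs (r u0 v0 * pu u0 v0) < K /\ r u0 v0 * r u0 v0 * Rabs (r u0 v0 * pv u0 v0) < lam * K).
  { apply (core Q r (fun x y => r x y * pu x y) (fun x y => r x y * pv x y) U U u0 v0 K lam
        (fun x y => (rv x y * pu x y + r x y * puv x y) - (- (2 * K * rv x y) / (r x y * r x y * r x y)))
        (fun x y => - (rv x y * pu x y + r x y * puv x y) - (- (2 * K * rv x y) / (r x y * r x y * r x y)))
        (fun x y => (ru x y * pv x y + r x y * puv x y) - (- (2 * (lam * K) * ru x y) / (r x y * r x y * r x y)))
        (fun x y => - (ru x y * pv x y + r x y * puv x y) - (- (2 * (lam * K) * ru x y) / (r x y * r x y * r x y))));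
      try lra; auto.
    - intros x y Hx Hy. assert (Hq : Q x y) by (apply (HinQ u0 v0); auto).
      split; auto. apply (Hpt x y Hq).
    - intros x y Hx Hy. assert (Hq : Q x y) by (apply (HinQ u0 v0); auto).
      destruct (Hgood x y ltac:(lra) ltac:(lra) Hq) as [[Hrx Hrx1] [HP HR]].
      destruct (Hpt x y Hq) as [_ [_ [Hru' [Hrv' [Hpu' [Hpv' [_ [_ [_ [Hpuv' [_ [_ [E3 _]]]]]]]]]]]]].
      assert (Hpdv := Hpd x y Hq).
      assert (Hrn : r x y <> 0) by lra.
      assert (Hr3 : 0 < r x y * r x y * r x y * r x y) by (repeat apply Rmult_lt_0_compat; lra).
      assert (Hss : 0 < r x y * r x y) by (apply Rmult_lt_0_compat; lra).
      split; [|split; [|split; [|split; [|split; [|split; [|split]]]]]].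
      + apply (D_minus (fun s => r x s * pu x s) (fun s => K / (r x s * r x s))).
        * apply (D_mult (fun s => r x s) (fun s => pu x s)); auto.
        * apply (D_Kdiv (fun s => r x s)); auto.
      + apply (D_minus (fun s => - (r x s * pu x s)) (fun s => K / (r x s * r x s))).
        * apply (D_opp (fun s => r x s * pu x s)). apply (D_mult (fun s => r x s) (fun s => pu x s)); auto.
        * apply (D_Kdiv (fun s => r x s)); auto.
      + apply (D_minus (fun s => r s y * pv s y) (fun s => lam * K / (r s y * r s y))).
        * apply (D_mult (fun s => r s y) (fun s => pv s y)); auto.
        * apply (D_Kdiv (fun s => r s y)); auto.
      + apply (D_minus (fun s => - (r s y * pv s y)) (fun s => lam * K / (r s y * r s y))).
        * apply (D_opp (fun s => r s y * pv s y)). apply (D_mult (fun s => r s y) (fun s => pv s y)); auto.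
        * apply (D_Kdiv (fun s => r s y)); auto.
      + intro HB0. cbv beta in *.
        destruct (key_ineq (r x y * ru x y) (r x y * rv x y) (r x y * pv x y) (r x y * r x y)
                    K lam C1 C2 e0) as [N1 N2]; auto.
        assert (Ed1 : (rv x y * pu x y + r x y * puv x y) - (- (2 * K * rv x y) / (r x y * r x y * r x y))
           = (- (r x y * ru x y) * (r x y * pv x y) * (r x y * r x y) + 2 * K * (r x y * rv x y)) * / (r x y * r x y * r x y * r x y)).
        { rewrite E3. field. auto. }
        assert (Ed2 : - (rv x y * pu x y + r x y * puv x y) - (- (2 * K * rv x y) / (r x y * r x y * r x y))
           = ((r x y * ru x y) * (r x y * pv x y) * (r x y * r x y) + 2 * K * (r x y * rv x y)) * / (r x y * r x y * r x y * r x y)).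
        { rewrite E3. field. auto. }
        rewrite Ed1, Ed2. assert (0 < / (r x y * r x y * r x y * r x y)) by (apply Rinv_0_lt_compat; auto).
        split; apply Rmult_neg_pos; auto.
      + intro HA0. cbv beta in *.
        assert (Hl' : C1 / C2 * (lam * K) = K) by (rewrite Hlamdef; field; split; lra).
        destruct (key_ineq (r x y * rv x y) (r x y * ru x y) (r x y * pu x y) (r x y * r x y)
                    (lam * K) (C1 / C2) C2 C1 e0) as [N1 N2]; auto.
        { apply Rmult_lt_0_compat; auto. }
        { rewrite Hl'; auto. }
        assert (Ed1 : (ru x y * pv x y + r x y * puv x y) - (- (2 * (lam * K) * ru x y) / (r x y * r x y * r x y))
           = (- (r x y * rv x y) * (r x y * pu x y) * (r x y * r x y) + 2 * (lam * K) * (r x y * ru x y)) * / (r x y * r x y * r x y * r x y)).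
        { rewrite E3. field. auto. }
        assert (Ed2 : - (ru x y * pv x y + r x y * puv x y) - (- (2 * (lam * K) * ru x y) / (r x y * r x y * r x y))
           = ((r x y * rv x y) * (r x y * pu x y) * (r x y * r x y) + 2 * (lam * K) * (r x y * ru x y)) * / (r x y * r x y * r x y * r x y)).
        { rewrite E3. field. auto. }
        rewrite Ed1, Ed2. assert (0 < / (r x y * r x y * r x y * r x y)) by (apply Rinv_0_lt_compat; auto).
        split; apply Rmult_neg_pos; auto.
      + apply c2_mult; [apply c2_mult; apply c2_of; auto|]. apply (Cap x y Hq).
      + apply c2_mult; [apply c2_mult; apply c2_of; auto|]. apply (Cbp x y Hq).
    - intros x Hx. assert (Hq := Hedge1 x ltac:(lra)).
      destruct (Hgood x U ltac:(lra) ltac:(lra) Hq) as [[Hrx Hrx1] _].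
      assert (HM := HMx x ltac:(lra)). simpl in HM.
      assert (Hrr : r x U * r x U < 1) by nra.
      generalize (Rabs_pos (r x U * pu x U)); intro. nra.
    - intros y Hy. assert (Hq := Hedge2 y ltac:(lra)).
      destruct (Hgood U y ltac:(lra) ltac:(lra) Hq) as [[Hrx Hrx1] _].
      assert (HM := HMy y ltac:(lra)). simpl in HM.
      assert (Hrr : r U y * r U y < 1) by nra.
      generalize (Rabs_pos (r U y * pv U y)); intro. nra. }
  destruct Hcore as [Hc1 Hc2].
  assert (Hlk : 0 < lam * K) by (apply Rmult_lt_0_compat; auto).
  split; [|split].
  - apply Rabs_def2 in Hru. apply Rabs_def2 in Hrv. split; [|split]; auto.
    + apply Rnot_le_lt; intro Hn. assert (0 <= r u0 v0 * ru u0 v0) by (apply Rmult_le_pos; lra). lra.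
    + apply Rnot_le_lt; intro Hn. assert (0 <= r u0 v0 * rv u0 v0) by (apply Rmult_le_pos; lra). lra.
  - apply (final_bound _ _ K); auto; lra.
  - apply (final_bound _ _ (lam * K)); auto; lra.
Qed.
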